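(* (1) For $3\le p<\omega$, $3\le n<\omega$ and $0\le m\le n$, $L_6(p,p)$ is isomorphic to a subalgebra of $L_6(m,n)$ if and only if $p=m=n$. (2) The lattice of subvarieties of $\mathbf{M}_1$ has cardinality $2^\omega$.
   Context: For a finite set $S$ with $|S|\ge3$ and $I\subseteq S$, $Q_6(I,S)$ is the finite $pm$-space on $S\cup\zeta(S)$, where $\zeta(S)$ is a disjoint copy of $S$, $\zeta$ interchanges each $s\in S$ with its copy, the topology is discrete, and the only strict comparabilities are: for $x,y\in S$, $x<\zeta(y)$ iff ($x\ne y$ or $x\notin I$). $Q_6(m,n)$ denotes $Q_6(I,S)$ with $|S|=n$, $|I|=m$, and $L_6(m,n)$ its dual pseudocomplemented de Morgan algebra (decreasing subsets $X$ with $\cap,\cup$, $X^\ast=$ complement of $[X)$, $X'=$ complement of $\zeta(X)$). $\mathbf{M}_1$ is the variety of pseudocomplemented de Morgan algebras $(L;\wedge,\vee,{}^\ast,{}^\prime,0,1)$ satisfying $x\wedge x^{\prime\ast\prime}\le y\vee y^\ast$ and $(x\wedge x^{\prime\ast})^{\prime\ast}=(x\wedge x^{\prime\ast})^{\prime\ast\prime\ast}$. *)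

(* Defs.v *)
From HB Require Import structures.
From mathcomp Require Import all_boot.
Set Implicit Arguments. Unset Strict Implicit. Unset Printing Implicit Defensive.

Record pmAlg := PmAlg {
  pcar :> Type;
  pmeet : pcar -> pcar -> pcar;
  pjoin : pcar -> pcar -> pcar;
  pstar : pcar -> pcar;      (* pseudocomplement  x^*  *)
  pprime : pcar -> pcar;     (* de Morgan negation x'  *)
  pzero : pcar;
  pone : pcar }.
Arguments pmeet : clear implicits.
Arguments pjoin : clear implicits.
Arguments pstar : clear implicits.
Arguments pprime : clear implicits.
Arguments pzero : clear implicits.
Arguments pone : clear implicits.

Definition is_pma (A : pmAlg) : Prop :=
  let m := pmeet A in let j := pjoin A in
  (forall x y z : A, m x (m y z) = m (m x y) z /\ j x (j y z) = j (j x y) z) /\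
      (forall x y : A, m x y = m y x /\ j x y = j y x) /\
      (forall x y : A, m x (j x y) = x /\ j x (m x y) = x) /\
      (forall x y z : A, m x (j y z) = j (m x y) (m x z)) /\
      (forall x : A, j x (pzero A) = x /\ m x (pone A) = x) /\
      (forall x y : A, pprime A (pprime A x) = x /\
                       pprime A (m x y) = j (pprime A x) (pprime A y) /\
                       pprime A (j x y) = m (pprime A x) (pprime A y)) /\
      (forall x y : A, m x y = pzero A <-> m y (pstar A x) = y).

Inductive term : Type :=
  | tVar of nat
  | tMeet of term & term
  | tJoin of term & term
  | tStar of term
  | tPrime of term
  | tZero
  | tOne.

Fixpoint teval (A : pmAlg) (v : nat -> A) (t : term) : A :=
  match t with
  | tVar i => v i
  | tMeet s u => pmeet A (teval v s) (teval v u)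
  | tJoin s u => pjoin A (teval v s) (teval v u)
  | tStar s => pstar A (teval v s)
  | tPrime s => pprime A (teval v s)
  | tZero => pzero A
  | tOne => pone A
  end.

Definition holds (A : pmAlg) (e : term * term) : Prop :=
  forall v : nat -> A, teval v e.1 = teval v e.2.

(* The two defining identities of M_1, with x = tVar 0, y = tVar 1,
   writing st(.) for the pseudocomplement and pr(.) for the de Morgan negation:
   [id1]  x meet pr(st(pr x))  <=  y join st y
          (written as  a meet (y join st y) = a  with a = x meet pr(st(pr x)))
   [id2]  st(pr u) = st(pr(st(pr u)))  with u = x meet st(pr x)  *)
Definition M1_id1 : term * term :=
  let x := tVar 0 in let y := tVar 1 in
  let a := tMeet x (tPrime (tStar (tPrime x))) in
  (tMeet a (tJoin y (tStar y)), a).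

Definition M1_id2 : term * term :=
  let x := tVar 0 in
  let u := tMeet x (tStar (tPrime x)) in
  (tStar (tPrime u), tStar (tPrime (tStar (tPrime u)))).

Definition inM1 (A : pmAlg) : Prop := is_pma A /\ holds A M1_id1 /\ holds A M1_id2.

Definition is_subvariety_M1 (K : pmAlg -> Prop) : Prop :=
  exists Sigma : term * term -> Prop,
    forall A : pmAlg, K A <-> (inM1 A /\ forall e, Sigma e -> holds A e).

(* Embeddings (= isomorphisms onto a subalgebra). *)
Definition pm_hom (A B : pmAlg) (f : A -> B) : Prop :=
  (forall x y, f (pmeet A x y) = pmeet B (f x) (f y)) /\
  (forall x y, f (pjoin A x y) = pjoin B (f x) (f y)) /\
  (forall x, f (pstar A x) = pstar B (f x)) /\
  (forall x, f (pprime A x) = pprime B (f x)) /\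
  f (pzero A) = pzero B /\ f (pone A) = pone B.

Definition pm_embeds (A B : pmAlg) : Prop :=
  exists f : A -> B, injective f /\ pm_hom f.

(* The pm-space Q_6(m,n) = Q_6(I,S) with S = 'I_n, I = {i | i < m},    *)
(* zeta(S) a disjoint copy of S (points inl s and inr s = zeta s).     *)
Definition Q6pt (n : nat) := ('I_n + 'I_n)%type.

Definition zeta n (x : Q6pt n) : Q6pt n :=
  match x with inl a => inr a | inr a => inl a end.

Definition q6lt (m n : nat) (x y : Q6pt n) : bool :=
  match x, y with
  | inl a, inr b => (a != b) || (m <= a)
  | _, _ => false
  end.

Definition q6le m n (x y : Q6pt n) : bool := (x == y) || q6lt m x y.

Definition q6down m n (X : {set Q6pt n}) : bool :=
  [forall y, forall x, (y \in X) && q6le m x y ==> (x \in X)].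

Definition q6up m n (X : {set Q6pt n}) : {set Q6pt n} :=
  [set y | [exists x in X, q6le m x y]].

Lemma q6downP m n (X : {set Q6pt n}) :
  reflect (forall x y, y \in X -> q6le m x y -> x \in X) (q6down m X).
Proof.
apply: (iffP forallP) => [H x y Hy Hxy | H y].
  by move/forallP: (H y) => /(_ x); rewrite Hy Hxy.
by apply/forallP => x; apply/implyP => /andP[]; exact: H.
Qed.

Lemma q6le_trans m n (x y z : Q6pt n) : q6le m x y -> q6le m y z -> q6le m x z.
Proof.
move=> /orP[/eqP->|Hxy] // /orP[/eqP<-|Hyz]; first by rewrite /q6le Hxy orbT.
by move: x y z Hxy Hyz => [?|?] [?|?] [?|?].
Qed.

Lemma q6le_zeta m n (x y : Q6pt n) : q6le m x y -> q6le m (zeta y) (zeta x).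
Proof.
move=> /orP[/eqP->|]; first by rewrite /q6le eqxx.
case: x => a; case: y => b //= H; apply/orP; right => /=.
by case: (eqVneq a b) H => [->|/negPf Hab] //=; rewrite eq_sym Hab.
Qed.

Definition L6car (m n : nat) := {X : {set Q6pt n} | q6down m X}.

Lemma q6down0 m n : q6down m (set0 : {set Q6pt n}).
Proof. by apply/q6downP => x y; rewrite inE. Qed.

Lemma q6downT m n : q6down m (setT : {set Q6pt n}).
Proof. by apply/q6downP => x y; rewrite !inE. Qed.

Lemma q6downI m n (X Y : {set Q6pt n}) : q6down m X -> q6down m Y -> q6down m (X :&: Y).
Proof.
move=> /q6downP HX /q6downP HY; apply/q6downP => x y; rewrite !inE => /andP[hx hy] le.
by rewrite (HX x y) // (HY x y).
Qed.

Lemma q6downU m n (X Y : {set Q6pt n}) : q6down m X -> q6down m Y -> q6down m (X :|: Y).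
Proof.
move=> /q6downP HX /q6downP HY; apply/q6downP => x y; rewrite !inE => /orP[hx|hy] le.
  by rewrite (HX x y).
by rewrite (HY x y) ?orbT.
Qed.

Definition q6star m n (X : {set Q6pt n}) : {set Q6pt n} := ~: q6up m X.

(* X' = complement of zeta(X) (zeta is an involution, so
   x \in zeta(X) iff zeta x \in X) *)
Definition q6prime n (X : {set Q6pt n}) : {set Q6pt n} := ~: [set x | zeta x \in X].

Lemma q6downS m n (X : {set Q6pt n}) : q6down m (q6star m X).
Proof.
apply/q6downP => x y; rewrite !inE => /negP Hy le; apply/negP => /existsP[z /andP[hz hzx]].
by apply: Hy; apply/existsP; exists z; rewrite hz (q6le_trans hzx le).
Qed.

Lemma q6downP' m n (X : {set Q6pt n}) : q6down m X -> q6down m (q6prime X).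
Proof.
move=> /q6downP HX; apply/q6downP => x y; rewrite !inE => /negP Hy le; apply/negP => hx.
by apply: Hy; apply: (HX _ (zeta x)) => //; exact: q6le_zeta.
Qed.

Definition L6meet m n (X Y : L6car m n) : L6car m n :=
  exist _ (sval X :&: sval Y) (q6downI (svalP X) (svalP Y)).
Definition L6join m n (X Y : L6car m n) : L6car m n :=
  exist _ (sval X :|: sval Y) (q6downU (svalP X) (svalP Y)).
Definition L6star m n (X : L6car m n) : L6car m n :=
  exist _ (q6star m (sval X)) (q6downS m (sval X)).
Definition L6prime m n (X : L6car m n) : L6car m n :=
  exist _ (q6prime (sval X)) (q6downP' (svalP X)).
Definition L6zero m n : L6car m n := exist _ set0 (q6down0 m n).
Definition L6one m n : L6car m n := exist _ setT (q6downT m n).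

(* L_6(m,n): the dual pm-algebra of Q_6(m,n) (decreasing subsets). *)
Definition L6 (m n : nat) : pmAlg :=
  @PmAlg (L6car m n) (@L6meet m n) (@L6join m n) (@L6star m n)
         (@L6prime m n) (L6zero m n) (L6one m n).

(* Main.v *)
Require Import Defs.
From HB Require Import structures.
From mathcomp Require Import all_boot zify.
From Stdlib Require Import ClassicalEpsilon.
Set Implicit Arguments. Unset Strict Implicit. Unset Printing Implicit Defensive.

Lemma L6ext m n (X Y : L6car m n) : sval X = sval Y -> X = Y.
Proof. case: X => X hX; case: Y => Y hY /= E; subst Y; f_equal; exact: bool_irrelevance. Qed.

Lemma mem_meet m n (X Y : L6car m n) z : (z \in sval (L6meet X Y)) = (z \in sval X) && (z \in sval Y).
Proof. by rewrite /= inE. Qed.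
Lemma mem_join m n (X Y : L6car m n) z : (z \in sval (L6join X Y)) = (z \in sval X) || (z \in sval Y).
Proof. by rewrite /= inE. Qed.
Lemma mem_prime m n (X : L6car m n) z : (z \in sval (L6prime X)) = (zeta z \notin sval X).
Proof. by rewrite /= /q6prime !inE. Qed.
Lemma mem_prime_l m n (X : L6car m n) s : (inl s \in sval (L6prime X)) = (inr s \notin sval X).
Proof. by rewrite mem_prime. Qed.
Lemma mem_prime_r m n (X : L6car m n) s : (inr s \in sval (L6prime X)) = (inl s \notin sval X).
Proof. by rewrite mem_prime. Qed.
Lemma mem_zero m n z : (z \in sval (L6zero m n)) = false.
Proof. by rewrite /= inE. Qed.
Lemma mem_one m n z : (z \in sval (L6one m n)) = true.
Proof. by rewrite /= inE. Qed.
Lemma mem_star_l m n (X : L6car m n) s : (inl s \in sval (L6star X)) = (inl s \notin sval X).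
Proof.
rewrite /= /q6star /q6up !inE; congr negb; apply/existsP/idP => [[x /andP[hx]]|h].
  case: x hx => a hx; rewrite /q6le /=; last by []. 
  by rewrite orbF => /eqP [<-].
by exists (inl s); rewrite h /q6le eqxx.
Qed.
Lemma mem_star_r m n (X : L6car m n) u : (inr u \in sval (L6star X)) =
  (inr u \notin sval X) && [forall s, (inl s \in sval X) ==> (s == u) && (s < m)].
Proof.
rewrite /= /q6star /q6up !inE negb_exists.
apply/forallP/andP => [H|[h1 /forallP h2] x].
  split.
    by move: (H (inr u)); rewrite /q6le eqxx andbT.
  apply/forallP => s; apply/implyP => hs; move: (H (inl s)); rewrite hs /q6le /=.
  by rewrite negb_or negbK -ltnNge.
case: x => [s|w]; rewrite /q6le /=.
  move: (h2 s); case: (inl s \in sval X) => //= /andP[/eqP -> hm].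
  by rewrite eqxx /= -ltnNge hm.
rewrite orbF; case: (eqVneq (inr w : Q6pt n) (inr u)) => [[->]|_]; last by rewrite andbF.
by rewrite (negPf h1).
Qed.

Lemma down_r m n (X : L6car m n) s t : inr t \in sval X -> s != t -> inl s \in sval X.
Proof.
move=> ht hst; move: (svalP X) => /q6downP H; apply: (H _ (inr t)) => //.
by rewrite /q6le /= hst.
Qed.

Lemma exists_neq n (H : 2 <= n) (u : 'I_n) : exists s : 'I_n, s != u.
Proof.
have h0 : 0 < n by lia. have h1 : 1 < n by lia.
case: u => u hu.
case: (eqVneq u 0) => e.
  by exists (Ordinal h1); apply/eqP => /(congr1 val) /=; rewrite e.
by exists (Ordinal h0); apply/eqP => /(congr1 val) /= E; move: e; rewrite -E.
Qed.

Lemma two_neq n (H : 3 <= n) (u : 'I_n) : exists s1 s2 : 'I_n, [/\ s1 != u, s2 != u & s1 != s2].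
Proof.
have h0 : 0 < n by lia. have h1 : 1 < n by lia. have h2 : 2 < n by lia.
case: u => u hu.
have ne : forall (a b : 'I_n), val a <> val b -> a != b.
  by move=> a b hab; apply/eqP => E; apply: hab; rewrite E.
case: (eqVneq u 0) => e.
  by exists (Ordinal h1), (Ordinal h2); split; apply: ne => /=; lia.
case: (eqVneq u 1) => e1.
  by exists (Ordinal h0), (Ordinal h2); split; apply: ne => /=; lia.
by exists (Ordinal h0), (Ordinal h1); split; apply: ne => /=; move/eqP: e; move/eqP: e1; lia.
Qed.

Lemma prime0 m n : L6prime (L6zero m n) = L6one m n.
Proof. by apply/L6ext/setP => z; rewrite mem_prime mem_zero mem_one. Qed.
Lemma prime1 m n : L6prime (L6one m n) = L6zero m n.
Proof. by apply/L6ext/setP => z; rewrite mem_prime mem_zero mem_one. Qed.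
Lemma primeK m n (X : L6car m n) : L6prime (L6prime X) = X.
Proof. by apply/L6ext/setP => z; rewrite !mem_prime negbK; case: z. Qed.
Lemma star0 m n : L6star (L6zero m n) = L6one m n.
Proof.
apply/L6ext/setP => -[s|u]; rewrite ?mem_star_l ?mem_star_r !mem_zero mem_one //=.
by apply/forallP => s; rewrite mem_zero.
Qed.
Lemma star1 m n (H : 2 <= n) : L6star (L6one m n) = L6zero m n.
Proof.
apply/L6ext/setP => -[s|u]; rewrite ?mem_star_l ?mem_star_r !mem_zero mem_one //=.
Qed.
Lemma zero_neq_one m n (H : 0 < n) : L6zero m n <> L6one m n.
Proof. move=> E; move: (congr1 (fun X : L6car m n => inl (Ordinal H) \in sval X) E). by rewrite mem_zero mem_one. Qed.

Lemma all_r_one m n (H : 2 <= n) (X : L6car m n) : (forall r, inr r \in sval X) -> X = L6one m n.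
Proof.
move=> h; apply/L6ext/setP => -[s|u]; rewrite mem_one ?h //.
have [t ht] := exists_neq H s.
by apply: (down_r (h t)); rewrite eq_sym.
Qed.

Lemma meet1 m n (X Y : L6car m n) : L6meet X Y = L6one m n -> X = L6one m n /\ Y = L6one m n.
Proof.
move=> E; split; apply/L6ext/setP => z; rewrite mem_one;
  by move: (congr1 (fun X : L6car m n => z \in sval X) E); rewrite mem_meet mem_one => /andP[].
Qed.
Lemma meet11 m n : L6meet (L6one m n) (L6one m n) = L6one m n.
Proof. by apply/L6ext/setP => z; rewrite mem_meet mem_one. Qed.
Lemma meet0l m n (Y : L6car m n) : L6meet (L6zero m n) Y = L6zero m n.
Proof. by apply/L6ext/setP => z; rewrite mem_meet mem_zero. Qed.
Lemma meet1l m n (Y : L6car m n) : L6meet (L6one m n) Y = Y.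
Proof. by apply/L6ext/setP => z; rewrite mem_meet mem_one. Qed.

Definition dfun m n (X : L6car m n) := L6star (L6prime (L6star (L6prime X))).
Definition Dfun m n (X : L6car m n) := dfun (dfun X).

Lemma d_notr m n (H : 3 <= n) (X : L6car m n) r : inr r \notin sval X ->
  (forall u, inr u \notin sval (dfun X)) /\ (forall s, inl s \in sval (dfun X) -> s = r).
Proof.
move=> hr; split.
  move=> u; rewrite /dfun mem_star_r mem_prime_r; apply/negP => /andP[_ /forallP h].
  have [s1 [s2 [h1 h2 h12]]] := two_neq H r.
  have e : forall s, s != r -> s == u.
    move=> s hs; move: (h s); rewrite mem_prime_l mem_star_r mem_prime_r negbK negb_and.
    have hB : ~~ [forall s0, (inl s0 \in sval (L6prime X)) ==> (s0 == s) && (s0 < m)].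
      apply/negP => /forallP /(_ r); rewrite mem_prime_l hr /=.
      by rewrite eq_sym (negPf hs).
    by rewrite hB orbT /= => /andP[].
  by move: (e _ h1) (e _ h2) h12 => /eqP -> /eqP ->; rewrite eqxx.
move=> s; rewrite /dfun mem_star_l mem_prime_l negbK mem_star_r mem_prime_r negbK.
by move=> /andP[_ /forallP /(_ r)]; rewrite mem_prime_l hr /= => /andP[/eqP].
Qed.

Lemma D_one m n : Dfun (L6one m n) = L6one m n.
Proof. by rewrite /Dfun /dfun !(prime1, star0). Qed.

Lemma D_not1 m n (H : 3 <= n) (X : L6car m n) : X <> L6one m n -> Dfun X = L6zero m n.
Proof.
have H2 : 2 <= n by lia.
move=> hX; case: (boolP [exists r, inr r \notin sval X]) => [/existsP[r hr]|/existsPn h]; last first.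
  by case: hX; apply: all_r_one => // r; move: (h r); rewrite negbK.
have [h1 _] := d_notr H hr.
apply/L6ext/setP => -[s|u]; rewrite mem_zero; apply/negbTE; last by have [h3 _] := d_notr H (h1 u); apply: h3.
have [r' hr'] := exists_neq H2 s.
apply/negP => hs; have [_ h2] := d_notr H (h1 r').
by move: (h2 _ hs) hr' => ->; rewrite eqxx.
Qed.

Definition Zf m n (X : L6car m n) := Dfun (L6prime X).
Definition Nf m n (X : L6car m n) := L6star (Zf X).

Lemma prime_eq1 m n (X : L6car m n) : L6prime X = L6one m n -> X = L6zero m n.
Proof. by move=> E; rewrite -(primeK X) E prime1. Qed.

Lemma Zf_0 m n (X : L6car m n) : X = L6zero m n -> Zf X = L6one m n.
Proof. by move=> ->; rewrite /Zf prime0 D_one. Qed.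
Lemma Zf_n0 m n (H : 3 <= n) (X : L6car m n) : X <> L6zero m n -> Zf X = L6zero m n.
Proof. by move=> hX; apply: D_not1 => // /prime_eq1. Qed.
Lemma Zf_1 m n (H : 3 <= n) (X : L6car m n) : Zf X = L6one m n -> X = L6zero m n.
Proof.
move=> E; apply/eqP/negPn/negP => /eqP hX; move: E; rewrite Zf_n0 //.
by apply: zero_neq_one; lia.
Qed.
Lemma Nf_n0 m n (H : 3 <= n) (X : L6car m n) : X <> L6zero m n -> Nf X = L6one m n.
Proof. by move=> hX; rewrite /Nf Zf_n0 // star0. Qed.
Lemma Nf_1 m n (H : 3 <= n) (X : L6car m n) : Nf X = L6one m n -> X <> L6zero m n.
Proof.
move=> E h0; move: E; rewrite /Nf Zf_0 // star1; last by lia.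
by apply: zero_neq_one; lia.
Qed.
Lemma Zf_bv m n (H : 3 <= n) (X : L6car m n) : Zf X = L6zero m n \/ Zf X = L6one m n.
Proof.
case: (boolP (X == L6zero m n)) => [/eqP/Zf_0|/eqP/(Zf_n0 H)]; tauto.
Qed.
Lemma Nf_bv m n (H : 3 <= n) (X : L6car m n) : Nf X = L6zero m n \/ Nf X = L6one m n.
Proof.
rewrite /Nf; case: (Zf_bv H X) => ->; [right; exact: star0|left; apply: star1; lia].
Qed.

Lemma atom_down m n (s : 'I_n) : q6down m [set (inl s : Q6pt n)].
Proof.
apply/q6downP => x y; rewrite inE => /eqP ->.
by case: x => a; rewrite /q6le /= ?orbF // => /eqP ->; rewrite inE.
Qed.
Definition atom m n (s : 'I_n) : L6car m n := exist (fun X => q6down m X) _ (atom_down m s).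
Lemma mem_atom m n (s : 'I_n) z : (z \in sval (atom m s)) = (z == inl s).
Proof. by rewrite /= inE. Qed.

Lemma no_r m n (H : 2 <= n) (X : L6car m n) :
  L6star (L6prime X) = L6zero m n -> forall s, inr s \notin sval X.
Proof.
move=> E s; move: (congr1 (fun X : L6car m n => inl s \in sval X) E).
by rewrite mem_star_l mem_prime_l negbK mem_zero => ->.
Qed.

Lemma atom_char m n (H : 3 <= n) (X : L6car m n) : X <> L6zero m n ->
  L6star (L6prime X) = L6zero m n -> L6star (L6prime (L6star X)) <> L6zero m n ->
  exists2 s : 'I_n, s < m & sval X = [set inl s].
Proof.
have H2 : 2 <= n by lia.
move=> h0 h1 h2; have nr := no_r H2 h1.
have [a ha] : exists a, inl a \in sval X.
  case: (boolP [exists a, inl a \in sval X]) => [/existsP[a ha]|/existsPn h]; first by exists a.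
  by case: h0; apply/L6ext/setP => -[s|u]; rewrite mem_zero; apply/negbTE; [apply: h|apply: nr].
have [z hz] : exists z, z \in sval (L6star (L6prime (L6star X))).
  case: (boolP [exists z, z \in sval (L6star (L6prime (L6star X)))]) => [/existsP[z hz]|/existsPn h].
    by exists z.
  by case: h2; apply/L6ext/setP => z; rewrite mem_zero; apply/negbTE; apply: h.
case: z hz => [s|u].
  rewrite mem_star_l mem_prime_l negbK mem_star_r => /andP[_ /forallP h].
  move: (h a); rewrite ha /= => /andP[/eqP ea hm]; subst a.
  exists s => //; apply/setP => -[t|t]; rewrite inE.
    by apply/idP/idP => [ht|/eqP[->] //]; move: (h t); rewrite ht /= => /andP[/eqP-> _].
  by rewrite (negPf (nr t)).
rewrite mem_star_r => /andP[_ /forallP h].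
have e : forall s, s != a -> s == u.
  move=> s hs; move: (h s); rewrite mem_prime_l mem_star_r (nr s) /=.
  have -> : ~~ [forall s0, (inl s0 \in sval X) ==> (s0 == s) && (s0 < m)].
    by apply/negP => /forallP /(_ a); rewrite ha /= eq_sym (negPf hs).
  by move=> /andP[].
have [s1 [s2 [h1' h2' h12]]] := two_neq H a.
by move: (e _ h1') (e _ h2') h12 => /eqP -> /eqP ->; rewrite eqxx.
Qed.

Lemma atom_n0 m n (s : 'I_n) : atom m s <> L6zero m n.
Proof.
by move=> /(congr1 (fun X : L6car m n => inl s \in sval X)); rewrite mem_atom mem_zero eqxx.
Qed.
Lemma atom_t1 m n (H : 2 <= n) (s : 'I_n) : L6star (L6prime (atom m s)) = L6zero m n.
Proof.
apply/L6ext/setP => -[t|u]; rewrite mem_zero; apply/negbTE.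
  by rewrite mem_star_l mem_prime_l negbK mem_atom.
rewrite mem_star_r mem_prime_r mem_atom negbK /=.
have [t ht] := exists_neq H u.
by apply/negP => /andP[_ /forallP /(_ t)]; rewrite /q6prime !inE (negPf ht).
Qed.
Lemma atom_t2 m n (s : 'I_n) : s < m -> L6star (L6prime (L6star (atom m s))) <> L6zero m n.
Proof.
move=> hs /(congr1 (fun X : L6car m n => inl s \in sval X)).
rewrite mem_star_l mem_prime_l negbK mem_star_r mem_atom mem_zero /=.
suff -> : [forall s0, (inl s0 \in sval (atom m s)) ==> (s0 == s) && (s0 < m)] by [].
by apply/forallP => t; rewrite mem_atom; apply/implyP => /eqP [->]; rewrite eqxx hs.
Qed.

Lemma L6_pma m n : is_pma (L6 m n).
Proof.
rewrite /is_pma /=.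
split; [move=> x y z; split|split; [move=> x y; split|split; [move=> x y; split|split; [move=> x y z|split; [move=> x; split|split; [move=> x y; split; [|split]|move=> x y]]]]]].
- by apply/L6ext/setP => w; rewrite !mem_meet andbA.
- by apply/L6ext/setP => w; rewrite !mem_join orbA.
- by apply/L6ext/setP => w; rewrite !mem_meet andbC.
- by apply/L6ext/setP => w; rewrite !mem_join orbC.
- by apply/L6ext/setP => w; rewrite !mem_meet mem_join; case: (w \in sval x).
- by apply/L6ext/setP => w; rewrite !mem_join mem_meet; case: (w \in sval x).
- apply/L6ext/setP => w; rewrite !(mem_meet, mem_join).
  by case: (w \in sval x); case: (w \in sval y).
- by apply/L6ext/setP => w; rewrite mem_join mem_zero orbF.
- by apply/L6ext/setP => w; rewrite mem_meet mem_one andbT.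
- exact: primeK.
- by apply/L6ext/setP => w; rewrite mem_join !mem_prime mem_meet negb_and.
- by apply/L6ext/setP => w; rewrite mem_meet !mem_prime mem_join negb_or.
split => E.
  apply/L6ext/setP => w; rewrite mem_meet; case hw: (w \in sval y) => //=.
  rewrite /q6star !inE; apply/negP => /existsP[z /andP[hz hle]].
  have hzy : z \in sval y by move: (svalP y) => /q6downP; apply; [exact: hw|exact: hle].
  move: (congr1 (fun X : L6car m n => z \in sval X) E).
  by rewrite mem_meet mem_zero hz hzy.
apply/L6ext/setP => w; rewrite mem_meet mem_zero; apply/negbTE/negP => /andP[hx hy].
move: (congr1 (fun X : L6car m n => w \in sval X) E) => /=.
rewrite !inE hy /= => /negP; apply; apply/existsP; exists w.
by rewrite hx /q6le eqxx.
Qed.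

Lemma L6_id1 m n : holds (L6 m n) M1_id1.
Proof.
move=> v /=; set x := v 0; set y := v 1.
apply/L6ext/setP => w; rewrite !mem_meet mem_join.
case: w => [s|u].
  by rewrite mem_star_l; case: (inl s \in sval y); rewrite ?andbT.
rewrite mem_prime_r mem_star_l mem_prime_l !negbK.
by case: (inr u \in sval x).
Qed.

Lemma L6_id2 m n (H : 2 <= n) : holds (L6 m n) M1_id2.
Proof.
move=> v /=; set x := v 0.
case: (boolP [exists r, inr r \notin sval x]) => [/existsP[r hr]|/existsPn h]; last first.
  have -> : x = L6one m n by apply: all_r_one => // r; move: (h r); rewrite negbK.
  by rewrite prime1 star0 meet1l prime1 star0 prime1 star0.
set u := L6meet x (L6star (L6prime x)).
have nu : forall w, inr w \notin sval u.
  move=> w; rewrite mem_meet mem_star_r mem_prime_r; apply/negP => /andP[hw /andP[_ /forallP h]].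
  move: (h r); rewrite mem_prime_l hr /= => /andP[/eqP e _]; subst r.
  by rewrite hw in hr.
have z : L6star (L6prime u) = L6zero m n.
  apply/L6ext/setP => -[s|w]; rewrite mem_zero; apply/negbTE.
    by rewrite mem_star_l mem_prime_l negbK.
  rewrite mem_star_r; apply/negP => /andP[_ /forallP h].
  have [t ht] := exists_neq H w.
  by move: (h t); rewrite mem_prime_l nu /= (negPf ht).
by rewrite z prime0 star1.
Qed.

Lemma L6_M1 m n (H : 2 <= n) : inM1 (L6 m n).
Proof. split; [exact: L6_pma|split; [exact: L6_id1|exact: L6_id2]]. Qed.

Lemma uniq_all_size n (l : seq 'I_n) : uniq l -> (forall x, x \in l) -> size l = n.
Proof.
move=> /card_uniqP <- h; transitivity #|'I_n|; last exact: card_ord.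
by apply: eq_card => x; rewrite h inE.
Qed.

Definition sel m n (s0 : 'I_n) (X : L6car m n) : 'I_n := odflt s0 [pick s | inl s \in sval X].
Lemma selE m n s0 (X : L6car m n) s : sval X = [set inl s] -> sel s0 X = s.
Proof.
move=> E; rewrite /sel; case: pickP => [t|/(_ s)]; rewrite E inE //=.
by move=> /eqP [].
by rewrite eqxx.
Qed.

Definition Jsrc p (l : seq 'I_p) : L6car p p :=
  foldr (fun i acc => L6join (atom p i) acc) (L6zero p p) l.

Lemma mem_Jsrc p (l : seq 'I_p) z : (z \in sval (Jsrc l)) = has (fun i => z \in sval (atom p i)) l.
Proof. by elim: l => [|i l IH]; rewrite ?mem_zero // -[Jsrc _]/(L6join (atom p i) (Jsrc l)) mem_join IH. Qed.

Lemma part1 p n m : 3 <= p -> 3 <= n -> m <= n -> pm_embeds (L6 p p) (L6 m n) -> p = m /\ m = n.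
Proof.
move=> hp hn hmn [f [finj [hM [hJ [hS [hP [h0 h1]]]]]]].
have fM : forall x y, f (L6meet x y) = L6meet (f x) (f y) := hM.
have fJ : forall x y, f (L6join x y) = L6join (f x) (f y) := hJ.
have fS : forall x, f (L6star x) = L6star (f x) := hS.
have fP : forall x, f (L6prime x) = L6prime (f x) := hP.
have f0 : f (L6zero p p) = L6zero m n := h0.
have hp2 : 2 <= p by lia.
have hn0 : 0 < n by lia.
pose s0 := Ordinal hn0.
pose sg (i : 'I_p) := sel s0 (f (atom p i)).
have at_i : forall i : 'I_p, sg i < m /\ sval (f (atom p i)) = [set inl (sg i)].
  move=> i.
  have [s hs E] : exists2 s : 'I_n, s < m & sval (f (atom p i)) = [set inl s].
    apply: atom_char => //.
    - by rewrite -f0 => /finj; apply: atom_n0.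
    - by rewrite -fP -fS atom_t1 // f0.
    - by rewrite -fS -fP -fS -f0 => /finj; apply: atom_t2.
  by rewrite /sg (selE _ E).
have sg_inj : injective sg.
  move=> i j e; apply/eqP/negPn/negP => hij.
  have E : L6meet (atom p i) (atom p j) = L6zero p p.
    apply/L6ext/setP => z; rewrite mem_meet !mem_atom mem_zero.
    by case: (eqVneq z (inl i)) => // ->; case: (eqVneq (inl i : Q6pt p) (inl j)) => // [[e']]; rewrite e' eqxx in hij.
  move: (congr1 f E); rewrite fM f0 => /(congr1 (fun X : L6car m n => inl (sg i) \in sval X)).
  by rewrite mem_meet mem_zero (at_i i).2 (at_i j).2 e !inE eqxx.
have cover : forall s : 'I_n, exists i, s = sg i.
  move=> s.
  have EJ : L6star (Jsrc (enum 'I_p)) = L6zero p p.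
    apply/L6ext/setP => -[t|u]; rewrite mem_zero; apply/negbTE.
      by rewrite mem_star_l mem_Jsrc negbK; apply/hasP; exists t; rewrite ?mem_enum // mem_atom.
    have [t ht] := exists_neq hp2 u.
    rewrite mem_star_r; apply/negP => /andP[_ /forallP /(_ t)].
    by rewrite mem_Jsrc (negPf ht) /= implybF => /negP; apply; apply/hasP; exists t; rewrite ?mem_enum // mem_atom.
  have mJ : forall l z, (z \in sval (f (Jsrc l))) = has (fun i => z \in sval (f (atom p i))) l.
    by move=> l z; elim: l => [|i l IH] /=; rewrite ?f0 ?mem_zero // fJ mem_join IH.
  move: (congr1 f EJ); rewrite fS f0 => /(congr1 (fun X : L6car m n => inl s \in sval X)).
  rewrite mem_star_l mem_zero mJ => /negbFE /hasP [i _].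
  by rewrite (at_i i).2 inE => /eqP [->]; exists i.
have pn : p = n.
  rewrite -(size_enum_ord p) -(size_map sg); apply: uniq_all_size.
    by rewrite (map_inj_uniq sg_inj) enum_uniq.
  by move=> x; have [i ->] := cover x; apply: map_f; rewrite mem_enum.
have hn1 : n.-1 < n by lia.
have [i ei] := cover (Ordinal hn1).
have : sg i < m := (at_i i).1.
rewrite -ei /= => hlt.
split; lia.
Qed.

Definition td (t : term) := tStar (tPrime (tStar (tPrime t))).
Definition tD t := td (td t).
Definition tZ t := tD (tPrime t).
Definition tN t := tStar (tZ t).
Definition tAtom i := tMeet (tN (tVar i))
  (tMeet (tZ (tStar (tPrime (tVar i)))) (tN (tStar (tPrime (tStar (tVar i)))))).
Definition tBigMeet (g : nat -> term) (l : seq nat) := foldr (fun i acc => tMeet (g i) acc) tOne l.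
Definition tJoinAll (l : seq nat) := foldr (fun i acc => tJoin (tVar i) acc) tZero l.
Definition tPairs k := tBigMeet (fun i => tBigMeet (fun j =>
   if i == j then tOne else tZ (tMeet (tVar i) (tVar j))) (iota 0 k)) (iota 0 k).
Definition tH k := tMeet (tMeet (tBigMeet tAtom (iota 0 k)) (tPairs k)) (tZ (tStar (tJoinAll (iota 0 k)))).
Definition eK k : term * term := (tH k, tZero).

Definition bv n (X : L6car n n) := X = L6zero n n \/ X = L6one n n.

Lemma bv_meet n (X Y : L6car n n) : bv X -> bv Y -> bv (L6meet X Y).
Proof. by case=> ->; [rewrite meet0l; left|rewrite meet1l]. Qed.

Lemma ev_bm1 n (v : nat -> L6 n n) g l : teval v (tBigMeet g l) = L6one n n ->
  forall i, i \in l -> teval v (g i) = L6one n n.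
Proof.
elim: l => [|j l IH] //= /meet1 [h1 h2] i; rewrite inE => /orP[/eqP ->//|]; exact: IH.
Qed.
Lemma ev_bm1' n (v : nat -> L6 n n) g l : (forall i, i \in l -> teval v (g i) = L6one n n) ->
  teval v (tBigMeet g l) = L6one n n.
Proof.
elim: l => [|j l IH] h //=.
rewrite -[teval v (g j)]/(teval v (g j) : L6car n n) h ?inE ?eqxx // IH ?meet11 // => i hi.
by apply: h; rewrite inE hi orbT.
Qed.
Lemma bv_bm n (v : nat -> L6 n n) g l : (forall i, bv (teval v (g i))) -> bv (teval v (tBigMeet g l)).
Proof. move=> h; elim: l => [|j l IH] /=; [right|apply: bv_meet] => //. Qed.

Lemma mem_JA n (v : nat -> L6 n n) l z :
  (z \in sval (teval v (tJoinAll l) : L6car n n)) = has (fun i => z \in sval (v i : L6car n n)) l.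
Proof.
elim: l => [|i l IH]; first by rewrite /= inE.
by rewrite -[teval _ _]/(L6join (v i) (teval v (tJoinAll l))) mem_join IH.
Qed.

Lemma bv_Z n (H : 3 <= n) (X : L6car n n) : bv (Zf X).
Proof. by case: (Zf_bv H X) => ->; [left|right]. Qed.
Lemma bv_N n (H : 3 <= n) (X : L6car n n) : bv (Nf X).
Proof. by case: (Nf_bv H X) => ->; [left|right]. Qed.

Lemma eK_holds n k : 3 <= n -> k != n -> holds (L6 n n) (eK k).
Proof.
move=> hn hk v; change (teval v (tH k) = L6zero n n).
have hn2 : 2 <= n by lia.
have bvH : bv (teval v (tH k)).
  apply: bv_meet; first apply: bv_meet.
  - apply: bv_bm => i; apply: bv_meet; first exact: bv_N.
    by apply: bv_meet; [exact: bv_Z|exact: bv_N].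
  - apply: bv_bm => i; apply: bv_bm => j; case: (i == j); [right|exact: bv_Z] => //.
  - exact: bv_Z.
case: bvH => // /meet1 [/meet1 [hA hP] hJ]; exfalso.
have hn0 : 0 < n by lia.
pose s0 := Ordinal hn0.
pose sg i := sel s0 (v i : L6car n n).
have at_i : forall i, i \in iota 0 k -> sval (v i : L6car n n) = [set inl (sg i)].
  move=> i hi; have := ev_bm1 hA hi => /meet1 [h1 /meet1 [h2 h3]].
  have [s _ E] := atom_char hn (Nf_1 hn h1) (Zf_1 hn h2) (Nf_1 hn h3).
  by rewrite /sg (selE _ E).
have inj : {in iota 0 k &, injective sg}.
  move=> i j hi hj e; apply/eqP/negPn/negP => hij.
  have := ev_bm1 (ev_bm1 hP hi) hj; rewrite (negPf hij) => /(Zf_1 hn).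
  move=> /(congr1 (fun X : L6car n n => inl (sg i) \in sval X)).
  by rewrite mem_meet mem_zero (at_i i hi) (at_i j hj) e !inE eqxx.
have cover : forall s : 'I_n, s \in map sg (iota 0 k).
  move=> s; move: (Zf_1 hn hJ) => /(congr1 (fun X : L6car n n => inl s \in sval X)).
  rewrite mem_star_l mem_zero mem_JA => /negbFE /hasP [i hi].
  by rewrite (at_i i hi) inE => /eqP [->]; apply: map_f.
have : size (map sg (iota 0 k)) = n.
  by apply: uniq_all_size => //; rewrite (map_inj_in_uniq inj) iota_uniq.
by rewrite size_map size_iota => e; rewrite e eqxx in hk.
Qed.

Lemma eK_fails n : 3 <= n -> ~ holds (L6 n n) (eK n).
Proof.
move=> hn h.
have hn0 : 0 < n by lia.
have hn2 : 2 <= n by lia.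
pose s0 := Ordinal hn0.
pose v (i : nat) : L6 n n := atom n (insubd s0 i).
have vi : forall i, i < n -> val (insubd s0 i) = i by move=> i hi; rewrite val_insubd hi.
have := h v; change (teval v (tH n) <> L6zero n n).
have -> : teval v (tH n) = L6one n n; last by move/esym; apply: zero_neq_one.
rewrite -[teval v (tH n)]/(L6meet (L6meet (teval v (tBigMeet tAtom (iota 0 n))) (teval v (tPairs n)))
   (Zf (L6star (teval v (tJoinAll (iota 0 n)))))).
rewrite ev_bm1' ?ev_bm1' ?meet11 ?Zf_0 ?meet11 //.
- apply/L6ext/setP => -[s|u]; rewrite mem_zero; apply/negbTE.
    rewrite mem_star_l mem_JA negbK; apply/hasP; exists (val s).
      by rewrite mem_iota /= add0n ltn_ord.
    by rewrite /v /= inE; apply/eqP; congr inl; apply: val_inj; rewrite vi ?ltn_ord.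
  have [t ht] := exists_neq hn2 u.
  rewrite mem_star_r; apply/negP => /andP[_ /forallP /(_ t)].
  rewrite (negPf ht) /= implybF => /negP; apply; rewrite mem_JA; apply/hasP; exists (val t).
    by rewrite mem_iota /= add0n ltn_ord.
  by rewrite /v /= inE; apply/eqP; congr inl; apply: val_inj; rewrite vi ?ltn_ord.
- move=> i hi; apply: ev_bm1' => j hj; case: eqVneq => // hij.
  apply: Zf_0; apply/L6ext/setP => z; rewrite mem_meet !mem_atom mem_zero.
  move: hi hj; rewrite !mem_iota /= !add0n => hi hj.
  case: (eqVneq z (inl (insubd s0 i))) => //= ->; apply/negbTE/eqP => -[] /(congr1 val).
  by rewrite !vi //; apply/eqP.
- move=> i hi; move: hi; rewrite mem_iota add0n /= => hi.
  change (L6meet (Nf (v i)) (L6meet (Zf (L6star (L6prime (v i)))) (Nf (L6star (L6prime (L6star (v i))))))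
     = L6one n n).
  rewrite Nf_n0 ?Zf_0 ?Nf_n0 ?meet11 //; first exact: atom_t2 (ltn_ord _).
  exact: atom_t1.
  exact: atom_n0.
Qed.

Fixpoint t2tree (t : term) : GenTree.tree nat :=
  match t with
  | tVar i => GenTree.Leaf i
  | tMeet a b => GenTree.Node 0 [:: t2tree a; t2tree b]
  | tJoin a b => GenTree.Node 1 [:: t2tree a; t2tree b]
  | tStar a => GenTree.Node 2 [:: t2tree a]
  | tPrime a => GenTree.Node 3 [:: t2tree a]
  | tZero => GenTree.Node 4 [::]
  | tOne => GenTree.Node 5 [::]
  end.

Fixpoint tree2t (x : GenTree.tree nat) : option term :=
  match x with
  | GenTree.Leaf i => Some (tVar i)
  | GenTree.Node 0 [:: a; b] =>
      match tree2t a, tree2t b with Some a', Some b' => Some (tMeet a' b') | _, _ => None end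
  | GenTree.Node 1 [:: a; b] =>
      match tree2t a, tree2t b with Some a', Some b' => Some (tJoin a' b') | _, _ => None end
  | GenTree.Node 2 [:: a] => omap tStar (tree2t a)
  | GenTree.Node 3 [:: a] => omap tPrime (tree2t a)
  | GenTree.Node 4 [::] => Some tZero
  | GenTree.Node 5 [::] => Some tOne
  | _ => None
  end.

Lemma t2treeK t : tree2t (t2tree t) = Some t.
Proof. by elim: t => //= [? -> ? ->|? -> ? ->|? ->|? ->]. Qed.

Definition decode (k : nat) : option (term * term) :=
  match unpickle k with
  | Some (GenTree.Node 0 [:: a; b]) =>
      match tree2t a, tree2t b with Some a', Some b' => Some (a', b') | _, _ => None end
  | _ => None
  end.
Definition encode (e : term * term) : nat := pickle (GenTree.Node 0 [:: t2tree e.1; t2tree e.2]).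
Lemma encodeK e : decode (encode e) = Some e.
Proof. by case: e => a b; rewrite /decode /encode pickleK /= !t2treeK. Qed.

Definition Th (K : pmAlg -> Prop) (e : term * term) : Prop := forall A, K A -> holds A e.

Lemma subvar_Th K : is_subvariety_M1 K -> forall A, K A <-> (inM1 A /\ forall e, Th K e -> holds A e).
Proof.
move=> [S hS] A; split => [hA|[hM hT]].
  by split; [exact: (proj1 ((hS A).1 hA))|move=> e he; exact: he].
apply/hS; split => // e he; apply: hT => B /hS [_]; exact.
Qed.

Definition Sig (s : nat -> bool) (e : term * term) : Prop := exists j, s j = false /\ e = eK (j + 3).
Definition fvar (s : nat -> bool) (A : pmAlg) : Prop := inM1 A /\ forall e, Sig s e -> holds A e.

Lemma fvar_sep s t k : s k = true -> t k = false ->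
  fvar s (L6 (k + 3) (k + 3)) /\ ~ fvar t (L6 (k + 3) (k + 3)).
Proof.
move=> hs ht; split.
  split; first by apply: L6_M1; lia.
  move=> e [j [hj ->]]; apply: eK_holds; first by lia.
  rewrite eqn_add2r; apply/negP => /eqP ejk; by rewrite ejk hs in hj.
move=> [_ h]; apply: (@eK_fails (k + 3)); first by lia.
by apply: h; exists k.
Qed.


Definition gfun (K : pmAlg -> Prop) (k : nat) : bool :=
  match decode k with
  | Some e => if excluded_middle_informative (Th K e) then true else false
  | None => false
  end.

Theorem corollary5p6 :
  (forall p n m : nat, 3 <= p -> 3 <= n -> m <= n ->
     (pm_embeds (L6 p p) (L6 m n) <-> (p = m /\ m = n)))
  /\
  ((exists f : (nat -> bool) -> (pmAlg -> Prop),
      (forall s, is_subvariety_M1 (f s)) /\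
      (forall s t, (forall A, f s A <-> f t A) -> forall k, s k = t k))
   /\
   (exists g : (pmAlg -> Prop) -> (nat -> bool),
      forall K1 K2, is_subvariety_M1 K1 -> is_subvariety_M1 K2 ->
        (forall k, g K1 k = g K2 k) -> forall A, K1 A <-> K2 A)).
Proof.
split.
  move=> p n m hp hn hmn; split; first exact: part1.
  move=> [<- <-]; exists id; split => //; by do !split.
split.
  exists fvar; split.
    by move=> s; exists (Sig s).
  move=> s t h k.
  case hs: (s k); case ht: (t k) => //.
    by have [h1 h2] := fvar_sep hs ht; case: h2; apply/h.
  by have [h1 h2] := fvar_sep ht hs; case: h2; apply/h.
exists gfun => K1 K2 h1 h2 hg.
have hT : forall e, Th K1 e <-> Th K2 e.
  move=> e; move: (hg (encode e)); rewrite /gfun encodeK.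
  case: excluded_middle_informative; case: excluded_middle_informative => //; tauto.
move=> A; rewrite (subvar_Th h1) (subvar_Th h2).
split => -[hM hE]; split => // e he; apply: hE; apply/hT => //.
Qed.
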